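(* Let $n\ge1$ and let $\lambda,\lambda_1,\dots,\lambda_{n+1}$ be real numbers with $|\lambda|<|\lambda_1|\le|\lambda_2|\le\cdots\le|\lambda_{n+1}|$. Then there exist no matrix $\mathbf U\in U(n,1)$ and complex number $c$ such that $\mathbf U\cdot\mathrm{diag}(\lambda,\lambda_2,\dots,\lambda_{n+1})\cdot\mathbf U^t=c\cdot\mathrm{diag}(\lambda_1,\lambda_2,\dots,\lambda_{n+1})$.
   Context: $U(n,1)$ denotes the group of $(n+1)\times(n+1)$ complex matrices $\mathbf U$ with $\mathbf U J\overline{\mathbf U}^t=J$, where $J=\mathrm{diag}(1,\dots,1,-1)$; $\mathbf U^t$ is the transpose. *)

(* Defs.v *)
(* Complex numbers are modelled by an arbitrary
   numClosedFieldType C (algebraically closed field with conjugation z^*,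
   e.g. algC or the complex numbers); "real" means z \is Num.real. *)
From HB Require Import structures.
From mathcomp Require Import all_boot all_order all_algebra.
Set Implicit Arguments. Unset Strict Implicit. Unset Printing Implicit Defensive.
Import Order.TTheory GRing.Theory Num.Theory.
Local Open Scope ring_scope.

Definition Jmat (C : numClosedFieldType) (n : nat) : 'M[C]_(n.+1) :=
  diag_mx (\row_(i < n.+1) (if i == ord_max then -1 else 1)).

Definition in_Un1 (C : numClosedFieldType) (n : nat) (U : 'M[C]_(n.+1)) : Prop :=
  U *m Jmat C n *m (map_mx (fun z : C => z^*) U)^T = Jmat C n.

(* Main.v *)
Require Import Defs.
From HB Require Import structures.
From mathcomp Require Import all_boot all_order all_algebra.
Import Order.TTheory GRing.Theory Num.Theory.
Local Open Scope ring_scope.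

Lemma map_diag_real (C : numClosedFieldType) n (f : 'I_n -> C) :
  (forall i, (f i)^* = f i) ->
  map_mx (fun z : C => z^*) (diag_mx (\row_i f i)) = diag_mx (\row_i f i).
Proof.
move=> Hf; apply/matrixP=> i j; rewrite !mxE rmorphMn; congr (_ *+ _); exact: Hf.

Qed.

Lemma diag_det0 (C : numClosedFieldType) n (f : 'I_n -> C) :
  \det (diag_mx (\row_i f i)) = 0 -> exists i, f i = 0.
Proof.
rewrite det_diag => /eqP /prodf_eq0 [i _ /eqP]; rewrite mxE => H; by exists i.
Qed.

Section S.
Variable C : numClosedFieldType.
Variable n : nat.
Definition jj (i : 'I_n.+1) : C := if i == ord_max then -1 else 1.

Lemma JJ : Jmat C n *m Jmat C n = 1%:M.
Proof.
rewrite /Jmat mulmx_diag; apply/matrixP=> i j; rewrite !mxE.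
by case: (i == ord_max); rewrite ?mulrNN mulr1.
Qed.

Lemma Jc : map_mx (fun z : C => z^*) (Jmat C n) = Jmat C n.
Proof. apply: map_diag_real => i; case: (i == ord_max); by rewrite ?rmorphN rmorph1. Qed.

Lemma transf (U : 'M[C]_n.+1) (c : C) (d1 d2 : 'I_n.+1 -> C) :
  (forall i, (d1 i)^* = d1 i) -> (forall i, (d2 i)^* = d2 i) ->
  in_Un1 U ->
  U *m diag_mx (\row_i d1 i) *m U^T = c *: diag_mx (\row_i d2 i) ->
  forall t, (exists i, d1 i * d1 i = t) -> exists j, c * c^* * (d2 j * d2 j) = t.
Proof.
move=> H1 H2 HU HE t [i0 Hi0].
set J := Jmat C n in HU.
set V := map_mx (fun z : C => z^*) U.
have HUe : U *m J *m V^T = J := HU.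
have HV : V^T *m J *m U = J.
  have h1 : U *m (J *m V^T *m J) = 1%:M by rewrite !mulmxA HUe JJ.
  have h2 := mulmx1C h1.
  have : J *m (J *m V^T *m J *m U) = J by rewrite h2 mulmx1.
  by rewrite !mulmxA JJ mul1mx.
have HV2 : U^T *m J *m V = J.
  have := congr1 (map_mx (fun z : C => z^*)) HV.
  have VV : map_mx (fun z : C => z^*) V = U.
    by apply/matrixP=> i j; rewrite !mxE conjCK.
  by rewrite !map_mxM Jc -map_trmx VV.
have HEc : V *m diag_mx (\row_i d1 i) *m V^T = c^* *: diag_mx (\row_i d2 i).
  have := congr1 (map_mx (fun z : C => z^*)) HE.
  by rewrite !map_mxM map_mxZ !map_diag_real // -map_trmx.
have K : U *m (diag_mx (\row_i d1 i) *m J *m diag_mx (\row_i d1 i)) *m V^T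
   = (c * c^*) *: (diag_mx (\row_i d2 i) *m J *m diag_mx (\row_i d2 i)).
  have : (U *m diag_mx (\row_i d1 i) *m U^T) *m J *m (V *m diag_mx (\row_i d1 i) *m V^T)
     = (c *: diag_mx (\row_i d2 i)) *m J *m (c^* *: diag_mx (\row_i d2 i)).
    by rewrite HE HEc.
  rewrite -!scalemxAl -!scalemxAr scalerA => <-.
  set D1 := diag_mx (\row_i d1 i).
  by rewrite -{1}HV2 !(@mulmxA C).
set D1 := diag_mx (\row_i d1 i) in K.
set D2 := diag_mx (\row_i d2 i) in K.
have Kt : U *m (D1 *m J *m D1 - t *: J) *m V^T
   = (c * c^*) *: (D2 *m J *m D2) - t *: J.
  by rewrite mulmxBr mulmxBl K -scalemxAr -scalemxAl HUe.
have diagE : forall (s : C) (d : 'I_n.+1 -> C),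
   s *: (diag_mx (\row_i d i) *m J *m diag_mx (\row_i d i)) - t *: J
   = diag_mx (\row_i (jj i * (s * (d i * d i) - t))).
  move=> s d; rewrite /J /Jmat !mulmx_diag; apply/matrixP=> a b; rewrite !mxE.
  rewrite /jj; case: (a == b); rewrite ?mulr0n ?mulr1n ?mulr0 ?subrr //.
  case: (a == ord_max); rewrite ?mulrN ?mulNr ?mulr1 ?mul1r //.
  by rewrite mulrN opprK opprB addrC.
have X0 : \det (D1 *m J *m D1 - t *: J) = 0.
  have := diagE 1 d1; rewrite scale1r => ->.
  rewrite det_diag; apply/eqP/prodf_eq0; exists i0 => //.
  by rewrite mxE mul1r Hi0 subrr mulr0.
have := congr1 determinant Kt; rewrite !det_mulmx X0 mulr0 mul0r diagE.
move/esym/diag_det0 => [j /eqP]; rewrite mulf_eq0 subr_eq0 => /orP [|/eqP]; last by exists j.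
by rewrite /jj; case: (j == ord_max); rewrite ?oppr_eq0 oner_eq0.
Qed.
End S.

Theorem mainTheorem7 (C : numClosedFieldType) (n : nat) (hn : (1 <= n)%N)
  (lam : C) (l : 'I_n.+1 -> C)
  (hlam : lam \is Num.real) (hl : forall i, l i \is Num.real)
  (hlt : `|lam| < `|l ord0|)
  (hmono : forall i j : 'I_n.+1, (i <= j)%N -> `|l i| <= `|l j|) :
  ~ exists (U : 'M[C]_(n.+1)) (c : C),
      in_Un1 U /\
      U *m diag_mx (\row_i (if i == ord0 then lam else l i)) *m U^T
        = c *: diag_mx (\row_i l i).
Proof.
move=> [U [c [HU HE]]].
have HR1 : forall i : 'I_n.+1, (if i == ord0 then lam else l i)^* = (if i == ord0 then lam else l i).
  by move=> i; case: ifP => _; apply: conj_Creal.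
have HR2 : forall i, (l i)^* = l i by move=> i; apply: conj_Creal.
have T := @transf _ _ _ _ _ _ HR1 HR2 HU HE.
have nm0 : (ord_max : 'I_n.+1) != ord0.
  by apply/eqP => /(congr1 val) /= H; rewrite H in hn.
have [j Hj] : exists j, c * c^* * (l j * l j) = l ord_max * l ord_max.
  by apply: T; exists ord_max; rewrite (negbTE nm0).
have [k Hk] : exists k, c * c^* * (l k * l k) = lam * lam.
  by apply: T; exists ord0; rewrite eqxx.
rewrite -!expr2 -(real_normK (hl j)) -(real_normK (hl ord_max)) in Hj.
rewrite -!expr2 -(real_normK (hl k)) -(real_normK hlam) in Hk.
set s := c * c^* in Hj Hk.
have s0 : 0 <= s := mul_conjC_ge0 c.
have ab : `|l j| <= `|l ord_max| by apply: hmono; rewrite -ltnS.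
have pe : `|l ord0| <= `|l k| by apply: hmono.
have pb : `|l ord0| <= `|l ord_max| by apply: hmono.
have z0 : 0 <= `|lam| := normr_ge0 _.
have p0 : 0 < `|l ord0| := le_lt_trans z0 hlt.
have b0 : 0 < `|l ord_max| := lt_le_trans p0 pb.
have e0 : 0 < `|l k| := lt_le_trans p0 pe.
have a0 : 0 < `|l j|.
  rewrite lt_def normr_ge0 andbT; apply/eqP => H.
  by move: Hj; rewrite H expr0n /= mulr0 => /esym /eqP; rewrite sqrf_eq0 gt_eqF.
have s1 : s < 1.
  rewrite -(ltr_pM2r (x := `|l k| ^+ 2)) ?exprn_gt0 // mul1r Hk !expr2.
  apply: ltr_pM => //; exact: lt_le_trans hlt pe.
have : s * `|l j| ^+ 2 < `|l ord_max| ^+ 2.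
  apply: (lt_le_trans (y := `|l j| ^+ 2)).
    by rewrite -[X in _ < X]mul1r ltr_pM2r ?exprn_gt0.
  by rewrite !expr2; apply: ler_pM => //; apply: ltW.
by rewrite Hj ltxx.
Qed.
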